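(* Let $G=(V,E)$ be a finite graph satisfying the $CD\psi(n,-K)$ condition for some $n>0$, $K>0$, where $\psi:(0,+\infty)\to\mathbb R$ is a $C^1$ concave function with $\psi'(1)=0$. Let $\sigma\in\mathbb R$ and $c:[0,\infty)\to\mathbb R$ continuous with either ($c\ge0$, $\sigma\le1$) or ($c\le0$, $\sigma\ge1$), and let $u$ be a positive solution of $\partial_tu=\Delta u+c(t)u^\sigma$ on $V$. Then for all vertices and all $t>0$, $$\Gamma^\psi(u)\le\frac{n}{2t}+Kn.$$
   Context: Graphs: $G=(V,E)$ is a connected, locally finite graph; each edge $xy$ carries a weight $w_{xy}>0$ (possibly asymmetric), and $\mu:V\to(0,\infty)$ is a vertex measure; $y\sim x$ means $xy\in E$. Laplacian: $\Delta f(x)=\frac{1}{\mu(x)}\sum_{y\sim x}w_{xy}(f(y)-f(x))$. For $f:V\to(0,\infty)$: $\Delta^\psi f(x)=\Delta\big[\psi\big(\tfrac{f}{f(x)}\big)\big](x)$; $\overline\psi(s)=\psi'(1)(s-1)-(\psi(s)-\psi(1))$, $\Gamma^\psi f=\Delta^{\overline\psi}f$; $(\Omega^\psi f)(x)=\Delta\big[\psi'\big(\tfrac{f}{f(x)}\big)\tfrac{f}{f(x)}\big(\tfrac{\Delta f}{f}-\tfrac{\Delta f(x)}{f(x)}\big)\big](x)$; $2\Gamma_2^\psi(f)=\Omega^\psi f+\frac{\Delta f\,\Delta^\psi f}{f}-\frac{\Delta(f\Delta^\psi f)}{f}$. $CD\psi(n,K)$: for every $f:V\to(0,\infty)$ and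 every vertex, $\Gamma_2^\psi(f)\ge\frac1n(\Delta^\psi f)^2+K\Gamma^\psi(f)$. A positive solution $u:V\times[0,\infty)\to(0,\infty)$ is continuously differentiable in $t$; operators are applied to $u(\cdot,t)$ at each fixed time. *)

(* Defs.v *)
From HB Require Import structures.
From mathcomp Require Import all_boot all_order all_algebra.
From mathcomp Require Import all_classical all_reals all_analysis.
Set Implicit Arguments. Unset Strict Implicit. Unset Printing Implicit Defensive.
Import Order.TTheory GRing.Theory Num.Theory numFieldTopology.Exports numFieldNormedType.Exports.
Local Open Scope ring_scope.
Local Open Scope classical_set_scope.

Section Graph.
Variables (R : realType) (V : finType).
(* adjacency relation [adj x y] means "y ~ x", i.e. xy is an edge *)
Variable adj : rel V.
Variable w : V -> V -> R.   (* edge weights w_{xy}, possibly asymmetric *)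
Variable mu : V -> R.

Definition weighted_graph : Prop :=
  [/\ symmetric adj, irreflexive adj,
      (forall x y : V, connect adj x y),
      (forall x y, adj x y -> 0 < w x y) &
      (forall x, 0 < mu x)].

Definition Lap (f : V -> R) (x : V) : R :=
  (mu x)^-1 * \sum_(y | adj x y) w x y * (f y - f x).

Definition Lap_psi (psi : R -> R) (f : V -> R) (x : V) : R :=
  Lap (fun y => psi (f y / f x)) x.

Definition psibar (psi : R -> R) (s : R) : R :=
  derive1 psi 1 * (s - 1) - (psi s - psi 1).

Definition Gamma_psi (psi : R -> R) (f : V -> R) (x : V) : R :=
  Lap_psi (psibar psi) f x.

Definition Omega_psi (psi : R -> R) (f : V -> R) (x : V) : R :=
  Lap (fun y => derive1 psi (f y / f x) * (f y / f x) *
                (Lap f y / f y - Lap f x / f x)) x.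

Definition Gamma2_psi (psi : R -> R) (f : V -> R) (x : V) : R :=
  (Omega_psi psi f x + Lap f x * Lap_psi psi f x / f x
   - Lap (fun y => f y * Lap_psi psi f y) x / f x) / 2.

Definition CDpsi (psi : R -> R) (n K : R) : Prop :=
  forall (f : V -> R), (forall y, 0 < f y) ->
  forall x, Gamma2_psi psi f x >= n^-1 * (Lap_psi psi f x) ^+ 2
                                 + K * Gamma_psi psi f x.
End Graph.

(* psi : (0,+oo) -> R is C^1 and concave (values outside (0,+oo) irrelevant) *)
Definition C1_concave_pos {R : realType} (psi : R -> R) : Prop :=
  [/\ (forall s : R, 0 < s -> derivable psi s 1),
      (forall s : R, 0 < s -> {for s, continuous (fun z : R => derive1 psi z)}) &
      (forall (a b t : R), 0 < a -> 0 < b -> 0 <= t <= 1 ->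
         t * psi a + (1 - t) * psi b <= psi (t * a + (1 - t) * b))].

(* u : V x [0,oo) -> (0,oo), C^1 in t on [0,oo), solving
   d/dt u = Delta u + c(t) u^sigma.  The time derivative is taken for t > 0;
   continuity of u(x,.) on [0,oo) and the equation give the one-sided C^1
   property at t = 0. *)
Definition positive_solution {R : realType} {V : finType} (adj : rel V)
  (w : V -> V -> R) (mu : V -> R) (c : R -> R) (sigma : R)
  (u : V -> R -> R) : Prop :=
  [/\ (forall x t, 0 <= t -> 0 < u x t),
      (forall x, {within `[0, +oo[, continuous (u x)}),
      (forall x t, 0 < t -> derivable (u x) t 1),
      (forall x t, 0 < t -> {for t, continuous (fun z : R => derive1 (u x) z)}) &
      (forall x t, 0 < t ->
         derive1 (u x) t = Lap adj w mu (fun y => u y t) x + c t * (u x t) `^ sigma)].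

(* Main.v *)
Require Import Defs.
Set Warnings "-notation-overridden,-ambiguous-paths,-notation-incompatible-prefix".
From HB Require Import structures.
From mathcomp Require Import all_boot all_order all_algebra.
From mathcomp Require Import all_classical all_reals all_analysis.
From mathcomp Require Import ring lra.
Import Order.TTheory GRing.Theory Num.Theory numFieldTopology.Exports numFieldNormedType.Exports.
Local Open Scope ring_scope.
Local Open Scope classical_set_scope.
Lemma deriv_ge (R : realType) (f : R -> R) (a m d : R) :
  derivable f a 1 -> 0 < d ->
  (forall h, 0 < h -> h < d -> m * h <= f (a + h) - f a) -> m <= f^`() a.
Proof.
move=> df d0 H.
rewrite derive1E /derive cvg_at_rightE //.
apply: limr_ge.
  move: df => /cvg_ex [l hl].
  apply/cvg_ex; exists l.
  move=> A /hl /nbhs_ballP [_ /posnumP[e] xe_A].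
  by exists e%:num => //= y xe_y; rewrite lt_def => /andP [xney _]; apply: xe_A.
near=> h.
have h0 : 0 < h by near: h; exact: nbhs_right_gt.
have hd : h < d by near: h; exact: nbhs_right_lt.
rewrite /= scaler1 addrC ler_pdivlMl // mulrC.
rewrite addrC (addrC h).
exact: H.
Unshelve. all: end_near. Qed.

Lemma deriv_le (R : realType) (f : R -> R) (a m d : R) :
  derivable f a 1 -> 0 < d ->
  (forall h, - d < h -> h < 0 -> m * h <= f (a + h) - f a) -> f^`() a <= m.
Proof.
move=> df d0 H.
rewrite derive1E /derive cvg_at_leftE //.
apply: limr_le.
  move: df => /cvg_ex [l hl].
  apply/cvg_ex; exists l.
  move=> A /hl /nbhs_ballP [_ /posnumP[e] xe_A].
  exists e%:num => //= y xe_y; rewrite lt_def => /andP [xney _].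
  by apply: xe_A => //; rewrite eq_sym.
near=> h.
have h0 : h < 0 by near: h; exact: nbhs_left_lt.
have hd : - d < h by near: h; apply: nbhs_left_gt; rewrite oppr_lt0.
have hN : 0 < - h by rewrite oppr_gt0.
rewrite /= scaler1 ler_ndivrMl // mulrC addrC (addrC h).
by rewrite addrC; apply: H.
Unshelve. all: end_near. Qed.

Lemma concave_tangent (R : realType) (psi : R -> R) (a b : R) :
  derivable psi a 1 ->
  (forall (a b t : R), 0 < a -> 0 < b -> 0 <= t <= 1 ->
         t * psi a + (1 - t) * psi b <= psi (t * a + (1 - t) * b)) ->
  0 < a -> 0 < b -> psi b <= psi a + derive1 psi a * (b - a).
Proof.
move=> da cc a0 b0.
have [ab|ba|<-] := ltgtP a b; last by rewrite subrr mulr0 addr0.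
- set m := (psi b - psi a) / (b - a).
  have ba0 : 0 < b - a by rewrite subr_gt0.
  have : m <= derive1 psi a.
    apply: (@deriv_ge R psi a m (b - a) da ba0) => h h0 hd.
    have t01 : 0 <= h / (b - a) <= 1.
      apply/andP; split; first by apply: divr_ge0; apply: ltW.
      by rewrite ler_pdivrMr // mul1r ltW.
    have := cc b a _ b0 a0 t01.
    have -> : h / (b - a) * b + (1 - h / (b - a)) * a = a + h.
      by field; rewrite gt_eqF.
    have -> : m * h = h / (b - a) * psi b + (1 - h / (b - a)) * psi a - psi a.
      by rewrite /m; field; rewrite gt_eqF.
    by move=> H; rewrite lerD2r.
  rewrite /m ler_pdivrMr // => H; lra.
- set m := (psi b - psi a) / (b - a).
  have ba0 : 0 < a - b by rewrite subr_gt0.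
  have : derive1 psi a <= m.
    apply: (@deriv_le R psi a m (a - b) da ba0) => h hd h0.
    have bn : b - a != 0 by rewrite subr_eq0 lt_eqF.
    have t01 : 0 <= h / (b - a) <= 1.
      have -> : h / (b - a) = (- h) / (a - b) by field; rewrite gt_eqF.
      apply/andP; split; first by apply: divr_ge0; rewrite ?oppr_ge0 ltW.
      by rewrite ler_pdivrMr // mul1r lerNl ltW.
    have := cc b a _ b0 a0 t01.
    have -> : h / (b - a) * b + (1 - h / (b - a)) * a = a + h.
      by field.
    have -> : m * h = h / (b - a) * psi b + (1 - h / (b - a)) * psi a - psi a.
      by rewrite /m; field.
    by move=> H; rewrite lerD2r.
  have nab : b - a < 0 by rewrite subr_lt0.
  rewrite /m ler_ndivlMr // => H; lra.
Qed.

Lemma isd_scal (R : realType) (f : R -> R) (k t df : R) :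
  is_derive t 1 f df -> is_derive t 1 (fun s => k * f s) (k * df).
Proof. move=> H; exact: (is_deriveZ k H). Qed.

Lemma isd_mul (R : realType) (f g : R -> R) (t df dg : R) :
  is_derive t 1 f df -> is_derive t 1 g dg ->
  is_derive t 1 (fun s => f s * g s) (f t * dg + g t * df).
Proof. move=> H1 H2; exact: (is_deriveM H1 H2). Qed.

Lemma isd_inv (R : realType) (f : R -> R) (t df : R) : f t != 0 ->
  is_derive t 1 f df -> is_derive t 1 (fun s => (f s)^-1) (- (f t) ^- 2 * df).
Proof. move=> H1 H2; exact: (is_deriveV H1 H2). Qed.

Lemma isd_add (R : realType) (f g : R -> R) (t df dg : R) :
  is_derive t 1 f df -> is_derive t 1 g dg ->
  is_derive t 1 (fun s => f s + g s) (df + dg).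
Proof. move=> H1 H2; exact: (is_deriveD H1 H2). Qed.

Lemma isd_sub (R : realType) (f g : R -> R) (t df dg : R) :
  is_derive t 1 f df -> is_derive t 1 g dg ->
  is_derive t 1 (fun s => f s - g s) (df - dg).
Proof. move=> H1 H2; exact: (is_deriveB H1 H2). Qed.

Lemma isd_comp (R : realType) (psi q : R -> R) (t dq : R) :
  derivable psi (q t) 1 -> is_derive t 1 q dq ->
  is_derive t 1 (fun s => psi (q s)) (derive1 psi (q t) * dq).
Proof.
move=> dp H; have := is_derive1_comp (derivableP dp) H.
by rewrite derive1E.
Qed.

Lemma isd_sum (R : realType) (I : finType) (P : pred I) (h : I -> R -> R)
  (dh : I -> R) (t : R) :
  (forall i, P i -> is_derive t 1 (h i) (dh i)) ->
  is_derive t 1 (fun s => \sum_(i | P i) h i s) (\sum_(i | P i) dh i).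
Proof.
move=> H.
suff: forall r, is_derive t 1 (fun s => \sum_(i <- r | P i) h i s)
   (\sum_(i <- r | P i) dh i) by [].
elim=> [|a r IH].
  have -> : (fun s => \sum_(i <- [::] | P i) h i s) = cst 0.
    by apply/funext => s; rewrite big_nil.
  by rewrite big_nil; exact: is_derive_cst.
case Pa: (P a).
  have -> : (fun s => \sum_(i <- a :: r | P i) h i s) =
     (fun s => h a s + \sum_(i <- r | P i) h i s).
    by apply/funext => s; rewrite big_cons Pa.
  by rewrite big_cons Pa; apply: isd_add => //; exact: H.
have -> : (fun s => \sum_(i <- a :: r | P i) h i s) =
     (fun s => \sum_(i <- r | P i) h i s).
  by apply/funext => s; rewrite big_cons Pa.
by rewrite big_cons Pa.
Qed.

Lemma isd_cst (R : realType) (k t : R) : is_derive t 1 (fun _ : R => k) 0.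
Proof. exact: is_derive_cst. Qed.

Lemma Gamma_derive (R : realType) (V : finType) (adj : rel V) (w : V -> V -> R)
  (mu : V -> R) (psi : R -> R) (c : R -> R) (sigma : R) (u : V -> R -> R)
  (x : V) (t : R) :
  (forall s, 0 < s -> derivable psi s 1) -> derive1 psi 1 = 0 ->
  positive_solution adj w mu c sigma u -> 0 < t ->
  is_derive t 1 (fun s => Gamma_psi adj w mu psi (fun y => u y s) x)
    (- (Omega_psi adj w mu psi (fun y => u y t) x +
        (mu x)^-1 * \sum_(y | adj x y) w x y * (derive1 psi (u y t / u x t) *
           (u y t / u x t) *
           (c t * (u y t `^ sigma / u y t - u x t `^ sigma / u x t))))).
Proof.
move=> dpsi d1 [upos _ uder _ ueq] t0.
have pb : psibar psi = fun z => psi 1 - psi z.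
  by apply/funext => z; rewrite /psibar d1 mul0r; ring.
rewrite /Gamma_psi /Lap_psi /Lap pb /=.
have upt y : 0 < u y t by apply: upos; apply: ltW.
have du y : is_derive t 1 (u y) ('D_1 (u y) t) by apply: derivableP; apply: uder.
have dq y : is_derive t 1 (fun s => u y s / u x s)
   (u y t * (- (u x t) ^- 2 * 'D_1 (u x) t) + (u x t)^-1 * 'D_1 (u y) t).
  apply: (@isd_mul R (u y) (fun s => (u x s)^-1)) => //.
  by apply: isd_inv => //; rewrite gt_eqF.
apply: is_derive_eq.
  apply: isd_scal; apply: isd_sum => y _; apply: isd_scal.
  apply: isd_sub; apply: isd_sub; try exact: isd_cst.
    apply: (@isd_comp R psi (fun s => u y s / u x s)) => //.
    by apply: dpsi; apply: divr_gt0.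
  apply: (@isd_comp R psi (fun s => u x s / u x s)) => //.
  by apply: dpsi; apply: divr_gt0.
rewrite -!derive1E !ueq //.
rewrite /Omega_psi; set L := Lap adj w mu _.
rewrite /Lap -[in RHS]mulrDr -[in RHS]mulrN; congr (_ * _).
rewrite -big_split -sumrN; apply: eq_bigr => y _ /=.
have ux0 : u x t != 0 by rewrite gt_eqF.
have uy0 : u y t != 0 by rewrite gt_eqF.
rewrite subrr mulr0 subr0.
rewrite -!derive1E !ueq // -/L. by field; rewrite ux0 uy0.
Qed.

Lemma powdiv (R : realType) (a s : R) : 0 < a -> a `^ s / a = expR ((s - 1) * ln a).
Proof.
move=> a0; rewrite /powR gt_eqF // mulrBl mul1r expRB lnK //.
Qed.

Lemma Dsign (R : realType) (cc s a b : R) :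
  (0 <= cc /\ s <= 1 \/ cc <= 0 /\ 1 <= s) -> 0 < a -> 0 < b ->
  0 <= cc * (a `^ s / a - b `^ s / b) * (b - a).
Proof.
move=> hc a0 b0; rewrite !powdiv //.
have [ab|ba] := lerP a b.
- have lab : ln a <= ln b by rewrite ler_ln // posrE.
  have ba0 : 0 <= b - a by rewrite subr_ge0.
  case: hc => [[c0 s1]|[c0 s1]].
  + have : (s - 1) * ln b <= (s - 1) * ln a by nra.
    rewrite -ler_expR => H.
    by apply: mulr_ge0 => //; apply: mulr_ge0 => //; rewrite subr_ge0.
  + have : (s - 1) * ln a <= (s - 1) * ln b by nra.
    rewrite -ler_expR => H.
    apply: mulr_ge0 => //; apply: mulr_le0 => //; rewrite subr_le0 //.
- have lab : ln b <= ln a by rewrite ler_ln // ?posrE // ltW.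
  have ba0 : b - a <= 0 by rewrite subr_le0 ltW.
  case: hc => [[c0 s1]|[c0 s1]].
  + have : (s - 1) * ln a <= (s - 1) * ln b by nra.
    rewrite -ler_expR => H.
    by apply: mulr_le0 => //; apply: mulr_ge0_le0 => //; rewrite subr_le0.
  + have : (s - 1) * ln b <= (s - 1) * ln a by nra.
    rewrite -ler_expR => H.
    apply: mulr_le0 => //; apply: mulr_le0_ge0 => //; rewrite subr_ge0 //.
Qed.

Lemma Rterm_ge0 (R : realType) (psi : R -> R) (cc s a b : R) :
  (forall z, 0 < z -> derivable psi z 1) ->
  (forall (a b t : R), 0 < a -> 0 < b -> 0 <= t <= 1 ->
         t * psi a + (1 - t) * psi b <= psi (t * a + (1 - t) * b)) ->
  derive1 psi 1 = 0 ->
  (0 <= cc /\ s <= 1 \/ cc <= 0 /\ 1 <= s) -> 0 < a -> 0 < b ->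
  0 <= derive1 psi (a / b) * (a / b) * (cc * (a `^ s / a - b `^ s / b)).
Proof.
move=> dp cv d1 hc a0 b0.
have q0 : 0 < a / b by apply: divr_gt0.
have t1 := @concave_tangent R psi (a / b) 1 (dp _ q0) cv q0 ltr01.
have t2 := @concave_tangent R psi 1 (a / b) (dp _ ltr01) cv ltr01 q0.
rewrite d1 mul0r addr0 in t2.
have P1 : 0 <= derive1 psi (a / b) * (b - a).
  have -> : b - a = b * (1 - a / b) by field; rewrite gt_eqF.
  rewrite mulrCA; apply: mulr_ge0; first exact: ltW.
  lra.
have D1 := @Dsign R cc s a b hc a0 b0.
move: P1 D1.
set P := derive1 psi (a / b); set D := cc * _ => P1 D1.
have [eab|ab] := eqVneq a b.
  by rewrite /D eab subrr mulr0 mulr0.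
have bn : b - a != 0 by rewrite subr_eq0 eq_sym.
have sq : 0 < (b - a) ^+ 2 by rewrite lt_def sqr_ge0 andbT sqrf_eq0.
have : 0 <= P * D * (b - a) ^+ 2.
  have -> : P * D * (b - a) ^+ 2 = (P * (b - a)) * (D * (b - a)) by ring.
  exact: mulr_ge0.
rewrite pmulr_lge0 // => PD.
rewrite mulrAC; apply: mulr_ge0 => //; exact: ltW.
Qed.

Lemma Gamma_Lpsi (R : realType) (V : finType) (adj : rel V) (w : V -> V -> R)
  (mu : V -> R) (psi : R -> R) (f : V -> R) (x : V) :
  derive1 psi 1 = 0 ->
  Gamma_psi adj w mu psi f x = - Lap_psi adj w mu psi f x.
Proof.
move=> d1; rewrite /Gamma_psi /Lap_psi /Lap /psibar d1 -mulrN -sumrN.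
congr (_ * _); apply: eq_bigr => y _; ring.
Qed.

Lemma Gamma2_le (R : realType) (V : finType) (adj : rel V) (w : V -> V -> R)
  (mu : V -> R) (psi : R -> R) (f : V -> R) (x : V) :
  weighted_graph adj w mu -> derive1 psi 1 = 0 -> (forall y, 0 < f y) ->
  (forall y, Gamma_psi adj w mu psi f y <= Gamma_psi adj w mu psi f x) ->
  2 * Gamma2_psi adj w mu psi f x <= Omega_psi adj w mu psi f x.
Proof.
move=> [_ _ _ wpos mupos] d1 fpos Gmax.
set Lp := Lap_psi adj w mu psi f.
have key : Lap adj w mu f x * Lp x <= Lap adj w mu (fun y => f y * Lp y) x.
  rewrite /Lap -mulrA ler_pM2l ?invr_gt0 // mulr_suml.
  apply: ler_sum => y axy.
  have := Gmax y; rewrite !Gamma_Lpsi // -/Lp => H.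
  have := wpos _ _ axy; have := fpos y => h1 h2.
  rewrite -mulrA ler_pM2l //.
  nra.
rewrite /Gamma2_psi -/Lp.
have fx := fpos x.
have : Lap adj w mu f x * Lp x / f x <= Lap adj w mu (fun y => f y * Lp y) x / f x.
  by rewrite ler_pM2r ?invr_gt0.
move=> H.
rewrite mulrC divfK ?pnatr_eq0 //.
lra.
Qed.

Lemma main_eps (R : realType) (V : finType) (adj : rel V)
  (w : V -> V -> R) (mu : V -> R) (psi : R -> R) (n K sigma : R)
  (c : R -> R) (u : V -> R -> R) (x : V) (T eps : R) :
  weighted_graph adj w mu ->
  0 < n -> 0 < K ->
  C1_concave_pos psi -> derive1 psi 1 = 0 ->
  CDpsi adj w mu psi n (- K) ->
  ((forall t, 0 <= t -> 0 <= c t) /\ sigma <= 1 \/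
   (forall t, 0 <= t -> c t <= 0) /\ 1 <= sigma) ->
  positive_solution adj w mu c sigma u ->
  0 < eps -> eps < T ->
  (T - eps) * Gamma_psi adj w mu psi (fun y => u y T) x <= n / 2 + K * n * (T - eps).
Proof.
move=> wg n0 K0 [dpsi _ cv] d1 CD hc us e0 eT.
have [upos _ _ _ _] := us.
set Gm := fun (t : R) (y : V) => Gamma_psi adj w mu psi (fun z => u z t) y.
set Om := fun (t : R) (y : V) => Omega_psi adj w mu psi (fun z => u z t) y.
set Rt := fun (t : R) (y : V) => (mu y)^-1 * \sum_(z | adj y z) w y z *
  (derive1 psi (u z t / u y t) * (u z t / u y t) *
   (c t * (u z t `^ sigma / u z t - u y t `^ sigma / u y t))).
have dG : forall (y : V) (t : R), 0 < t -> is_derive t 1 (fun s => Gm s y) (- (Om t y + Rt t y)).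
  by move=> y t ht; exact: (@Gamma_derive R V adj w mu psi c sigma u y t dpsi d1 us ht).
set F := fun (y : V) (t : R) => (t - eps) * Gm t y.
have dF : forall (y : V) (t : R), 0 < t ->
    is_derive t 1 (F y) ((t - eps) * (- (Om t y + Rt t y)) + Gm t y * (1 - 0)).
  move=> y t ht.
  apply: (@isd_mul R (fun s => s - eps) (fun s => Gm s y)); last exact: dG.
have cF : forall y, {within `[eps, T], continuous (F y)}.
  move=> y; apply: derivable_within_continuous => t.
  rewrite in_itv /= => /andP [h1 _].
  by case: (dF y t (lt_le_trans e0 h1)).
have mx : forall y, exists ty, ty \in `[eps, T]%R /\
    forall t, t \in `[eps, T]%R -> F y t <= F y ty.
  by move=> y; have [ty h1 h2] := EVT_max (ltW eT) (cF y); exists ty; split.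
have [tf htf] := choice mx.
have [y0 _ Hy0] := @arg_maxP _ _ V x xpredT (fun y => F y (tf y)) isT.
have [t0in t0max] := htf y0.
have glob : forall y t, t \in `[eps, T]%R -> F y t <= F y0 (tf y0).
  move=> y t tin; apply: le_trans (Hy0 y isT); exact: (htf y).2.
set t0 := tf y0 in t0in t0max glob.
have Tin : T \in `[eps, T]%R by rewrite in_itv /= lexx ltW.
apply: le_trans (glob x T Tin) _.
move: t0in; rewrite in_itv /= => /andP [et0 t0T].
have KnT : 0 <= K * n * (T - eps) by rewrite mulr_ge0 ?subr_ge0 ?ltW // mulr_gt0.
have [et|et] := eqVneq eps t0.
  rewrite /F -et subrr mul0r; apply: addr_ge0 => //.
  by rewrite divr_ge0 ?ltW.
have st : eps < t0 by rewrite lt_def eq_sym et.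
have t00 : 0 < t0 by apply: lt_trans st.
set s := t0 - eps.
have s0 : 0 < s by rewrite subr_gt0.
set G := Gm t0 y0.
have sp : forall y, Gm t0 y <= G.
  move=> y; have : F y t0 <= F y0 t0.
    by apply: glob; rewrite in_itv /= et0.
  by rewrite /F -/s ler_pM2l.
pose g := fun t => -1 * F y0 t.
have dg : is_derive t0 1 g (-1 * ((t0 - eps) * (- (Om t0 y0 + Rt t0 y0)) + Gm t0 y0 * (1 - 0))).
  by apply: isd_scal; apply: dF.
have dgle : derive1 g t0 <= 0.
  apply: (@deriv_le R g t0 0 s) => //.
  move=> h hs h0; rewrite mul0r /g.
  have : F y0 (t0 + h) <= F y0 t0.
    apply: glob; rewrite in_itv /=; apply/andP; split.
      rewrite -lerBlDl; apply: ltW; rewrite /s in hs; lra.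
    apply: le_trans t0T; lra.
  lra.
rewrite derive1E derive_val in dgle.
have fpos : forall y, 0 < u y t0 by move=> y; apply: upos; apply: ltW.
have cd := CD (fun y => u y t0) fpos y0.
have g2 := @Gamma2_le R V adj w mu psi (fun y => u y t0) y0 wg d1 fpos sp.
rewrite -/(Om t0 y0) in g2.
move: cd; rewrite -(opprK (Lap_psi _ _ _ _ _ _)) -Gamma_Lpsi // -/(Gm t0 y0) -/G sqrrN => cd.
have Rt0 : 0 <= Rt t0 y0.
  rewrite /Rt; apply: mulr_ge0; first by case: wg => _ _ _ _ mp; rewrite invr_ge0 ltW.
  apply: sumr_ge0 => z az; apply: mulr_ge0; first by case: wg => _ _ _ wp _; exact: ltW (wp _ _ az).
  apply: Rterm_ge0 => //.
  by case: hc => [[h1 h2]|[h1 h2]]; [left|right]; split => //; apply: h1; apply: ltW.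
move: dgle cd g2 Rt0.
rewrite -/s -/G.
set O := Om t0 y0; set Rr := Rt t0 y0; set Q := Gamma2_psi _ _ _ _ _ _ => dgle cd g2 Rt0.
rewrite /F -/s -/G.
have ni : n * n^-1 = 1 by rewrite mulfV // gt_eqF.
have ni0 : 0 < n^-1 by rewrite invr_gt0.
have sO : s * O <= G by nra.
have OG : 2 * n^-1 * G ^+ 2 - 2 * K * G <= O by nra.
have [G0|G0] := lerP G 0.
  have : s * G <= 0 by nra.
  have : 0 <= n / 2 by rewrite divr_ge0 ?ltW.
  nra.
have : s * (2 * n^-1 * G ^+ 2 - 2 * K * G) <= G by nra.
move=> H1.
have H2 : s * (2 * n^-1 * G - 2 * K) <= 1.
  have : G * (s * (2 * n^-1 * G - 2 * K)) <= G * 1 by nra.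
  by rewrite ler_pM2l.
have H3 : s * G * (2 * n^-1) <= 1 + 2 * K * s by nra.
have H4 : s * G <= (1 + 2 * K * s) * (n / 2).
  have e : s * G = s * G * (2 * n^-1) * (n / 2) by field; rewrite gt_eqF.
  rewrite [X in X <= _]e; apply: ler_wpM2r => //.
  by rewrite divr_ge0 // ltW.
have : (1 + 2 * K * s) * (n / 2) = n / 2 + K * n * s by field.
move=> E; rewrite E in H4.
apply: le_trans H4 _; rewrite lerD2l ler_pM2l ?mulr_gt0 //.
by rewrite lerD2r.
Qed.

Theorem mainTheorem13 (R : realType) (V : finType) (adj : rel V)
  (w : V -> V -> R) (mu : V -> R) (psi : R -> R) (n K sigma : R)
  (c : R -> R) (u : V -> R -> R) :
  weighted_graph adj w mu ->
  0 < n -> 0 < K ->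
  C1_concave_pos psi -> derive1 psi 1 = 0 ->
  CDpsi adj w mu psi n (- K) ->
  {within `[0, +oo[, continuous c} ->
  ((forall t, 0 <= t -> 0 <= c t) /\ sigma <= 1 \/
   (forall t, 0 <= t -> c t <= 0) /\ 1 <= sigma) ->
  positive_solution adj w mu c sigma u ->
  forall (x : V) (t : R), 0 < t ->
    Gamma_psi adj w mu psi (fun y => u y t) x <= n / (2 * t) + K * n.
Proof.
move=> wg n0 K0 cv d1 CD _ hc us x t t0.
set G := Gamma_psi adj w mu psi (fun y => u y t) x.
rewrite leNgt; apply/negP => H.
set g := G - K * n.
have t2 : 0 < 2 * t by rewrite mulr_gt0.
have ng : n / (2 * t) < g by rewrite /g ltrBrDr.
have g0 : 0 < g by apply: le_lt_trans ng; rewrite divr_ge0 ?ltW.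
set a := n / (2 * g).
have ea : a * (2 * g) = n by rewrite /a divfK // gt_eqF // mulr_gt0.
have a0 : 0 < a by rewrite /a divr_gt0 // mulr_gt0.
have nt : n < g * (2 * t) by move: ng; rewrite ltr_pdivrMr.
have at0 : a < t by nra.
set s := (t + a) / 2.
have hs := @main_eps R V adj w mu psi n K sigma c u x t (t - s) wg n0 K0 cv d1 CD hc us.
have e1 : 0 < t - s by rewrite /s; lra.
have e2 : t - s < t by rewrite /s; lra.
have := hs e1 e2.
have -> : t - (t - s) = s by ring.
rewrite /s -/G => H2.
have : (t + a) / 2 * g <= n / 2.
  have -> : (t + a) / 2 * g = (t + a) / 2 * G - K * n * ((t + a) / 2) by rewrite /g; ring.
  lra.
nra.
Qed.
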